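(* Let $\Omega=\{\omega_r=(1,r)^{\mathrm t} : r\in\mathcal R\}\subset\mathbb R^{n+1}$ be a GPT state space with unit effect $u=(1,\mathbf 0)^{\mathrm t}$, and suppose every effect $e\in\mathcal E$ can be written as $e=\gamma\,(1,m)^{\mathrm t}$ with $\gamma\in[0,1]$ and $m\in\mathcal M$, for some set $\mathcal M\subset\mathbb R^n$. Then $$\chi_C(\Omega)\le \sup_{r\in\mathcal R,\ m\in\mathcal M}\log_2(1+m\cdot r)\le \log_2(1+MR),$$ where $M=\sup_{m\in\mathcal M}\lVert m\rVert$ and $R=\sup_{r\in\mathcal R}\lVert r\rVert$.
   Context: A single-system GPT state space is a set $\Omega=\{\omega_r=(1,r)^{\mathrm t}: r\in\mathcal R\}\subset\mathbb R^{n+1}$ with $\mathcal R\subset\mathbb R^n$ compact and convex; the unit effect is $u=(1,\mathbf 0)^{\mathrm t}$. The effect set is $\mathcal E=\{e\in\mathbb R^{n+1}: 0\le e\cdot\omega\le 1\ \forall\omega\in\Omega\}$ (Euclidean inner product). A measurement is a finite family $\{e_y\}\subset\mathcal E$ with $\sum_y e_y=u$; outcome $y$ on state $\omega$ has probability $e_y\cdot\omega$. The classical capacity $\chi_C(\Omega)$ is the supremum of the mutual information $I(X:Y)=\sum_{x,y}p(x,y)\log_2\frac{p(x,y)}{p(x)p(y)}$ over all finite message sets with probability distributions $p_x$, encoding states $\omega_x\in\Omega$ and measurements $\{e_y\}$, where $p(x,y)=p_x\,e_y\cdot\omega_x$. *)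

(* Defs.v *)
From mathcomp Require Import all_boot.
From Stdlib Require Import Reals.
Set Implicit Arguments.
Unset Strict Implicit.
Unset Printing Implicit Defensive.
Local Open Scope R_scope.

Definition vec (n : nat) := 'I_n -> R.

Definition dotv (n : nat) (a b : vec n) : R := \big[Rplus/0]_(i < n) (a i * b i).
Definition normv (n : nat) (a : vec n) : R := sqrt (dotv a a).

Definition log2 (x : R) : R := ln x / ln 2.

(* A vector of R^{n+1} written as (first coordinate, remaining n coordinates). *)
Definition vec1 (n : nat) := (R * vec n)%type.

Definition omega (n : nat) (r : vec n) : vec1 n := (1, r).

Definition dot1 (n : nat) (e w : vec1 n) : R := fst e * fst w + dotv (snd e) (snd w).

Definition unit_effect (n : nat) : vec1 n := (1, fun _ => 0).

Definition scaled_effect (n : nat) (g : R) (m : vec n) : vec1 n := (g, fun i => g * m i).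

Definition convex_set (n : nat) (A : vec n -> Prop) : Prop :=
  forall a b t, A a -> A b -> 0 <= t <= 1 ->
    A (fun i => t * a i + (1 - t) * b i).

Definition converges_to (n : nat) (u : nat -> vec n) (l : vec n) : Prop :=
  forall eps, 0 < eps -> exists N, forall k, (N <= k)%coq_nat ->
    normv (fun i => u k i - l i) < eps.

Definition compact_set (n : nat) (A : vec n -> Prop) : Prop :=
  forall u : nat -> vec n, (forall k, A (u k)) ->
    exists (phi : nat -> nat) (l : vec n),
      (forall k, (phi k < phi (S k))%coq_nat) /\ A l /\ converges_to (fun k => u (phi k)) l.

Definition is_effect (n : nat) (Rset : vec n -> Prop) (e : vec1 n) : Prop :=
  forall r, Rset r -> 0 <= dot1 e (omega r) <= 1.

(* mutual information I(X:Y) of the joint distribution p(x,y) = p_x * e_y.omega_x,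
   with the convention 0 log 0 = 0 (terms with p(x,y) = 0 are dropped). *)
Definition mutual_info (k l : nat) (pxy : 'I_k -> 'I_l -> R) : R :=
  let px x := \big[Rplus/0]_(y < l) pxy x y in
  let py y := \big[Rplus/0]_(x < k) pxy x y in
  \big[Rplus/0]_(x < k) \big[Rplus/0]_(y < l)
     (if Rlt_dec 0 (pxy x y) then pxy x y * log2 (pxy x y / (px x * py y)) else 0).

(* a finite encoding/decoding scheme on the state space Omega_R:
   distribution p on k messages, encoding states omega_{r_x}, measurement {e_y}_{y<l} *)
Definition valid_scheme (n : nat) (Rset : vec n -> Prop) (k l : nat)
  (p : 'I_k -> R) (r : 'I_k -> vec n) (e : 'I_l -> vec1 n) : Prop :=
  (forall x, 0 <= p x) /\ \big[Rplus/0]_(x < k) p x = 1 /\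
  (forall x, Rset (r x)) /\
  (forall y, is_effect Rset (e y)) /\
  \big[Rplus/0]_(y < l) fst (e y) = fst (unit_effect n) /\
  (forall i, \big[Rplus/0]_(y < l) snd (e y) i = snd (unit_effect n) i).

Definition joint (n k l : nat) (p : 'I_k -> R) (r : 'I_k -> vec n) (e : 'I_l -> vec1 n)
  : 'I_k -> 'I_l -> R := fun x y => p x * dot1 (e y) (omega (r x)).

(* Main.v *)
From HB Require Import structures.
Require Import Defs.
From mathcomp Require Import all_boot.
From Stdlib Require Import Reals.
From Stdlib Require Import Lra.
Local Open Scope R_scope.

Lemma Rpa_assoc : associative Rplus. Proof. by move=> *; rewrite Rplus_assoc. Qed.
HB.instance Definition _ := Monoid.isComLaw.Build R 0 Rplus Rpa_assoc Rplus_comm Rplus_0_l.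

Lemma sumD n (F G : 'I_n -> R) :
  \big[Rplus/0]_(i < n) (F i + G i) = \big[Rplus/0]_(i < n) F i + \big[Rplus/0]_(i < n) G i.
Proof. exact: big_split. Qed.

Lemma sumMl n c (F : 'I_n -> R) :
  \big[Rplus/0]_(i < n) (c * F i) = c * \big[Rplus/0]_(i < n) F i.
Proof.
elim: n F => [|n IH] F; first by rewrite !big_ord0; ring.
by rewrite !big_ord_recr /= IH Rmult_plus_distr_l.
Qed.

Lemma sumMr n c (F : 'I_n -> R) :
  \big[Rplus/0]_(i < n) (F i * c) = \big[Rplus/0]_(i < n) F i * c.
Proof.
elim: n F => [|n IH] F; first by rewrite !big_ord0; ring.
by rewrite !big_ord_recr /= IH Rmult_plus_distr_r.
Qed.

Lemma sum_le n (F G : 'I_n -> R) : (forall i, F i <= G i) ->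
  \big[Rplus/0]_(i < n) F i <= \big[Rplus/0]_(i < n) G i.
Proof.
elim: n F G => [|n IH] F G H; first by rewrite !big_ord0; lra.
rewrite !big_ord_recr /=; apply: Rplus_le_compat; [apply: IH => i|]; apply: H.
Qed.

Lemma sum_ge0 n (F : 'I_n -> R) : (forall i, 0 <= F i) -> 0 <= \big[Rplus/0]_(i < n) F i.
Proof.
move=> H; apply: (big_ind (fun x => 0 <= x)); [lra| move=> x y hx hy; lra| move=> i _; apply: H].
Qed.

Lemma term_le_sum n (F : 'I_n -> R) j : (forall i, 0 <= F i) -> F j <= \big[Rplus/0]_(i < n) F i.
Proof.
move=> H; rewrite (bigD1 j) //= -{1}[F j]Rplus_0_r; apply: Rplus_le_compat_l.
by apply: (big_ind (fun x => 0 <= x)); [lra| move=> x y hx hy; lra| move=> i _; apply: H].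
Qed.

Lemma ln_le' x y : 0 < x -> x <= y -> ln x <= ln y.
Proof.
move=> hx hxy; case: (Rle_lt_or_eq_dec _ _ hxy) => h.
  by apply: Rlt_le; apply: ln_increasing.
by rewrite h; lra.
Qed.

Lemma ln_le_sub1 t : 0 < t -> ln t <= t - 1.
Proof. move=> ht; have := exp_ineq1_le (ln t); rewrite exp_ln //; lra. Qed.

Lemma ln2_pos : 0 < ln 2.
Proof. have := ln_lt_2; have : 0 < / 2 by lra. lra. Qed.

Lemma CS n (a b : vec n) : dotv a b <= normv a * normv b.
Proof.
set A := dotv a a; set B := dotv b b; set C := dotv a b.
have key : forall t, 0 <= t * t * A + 2 * t * C + B.
  move=> t.
  have E : \big[Rplus/0]_(i < n) ((t * a i + b i) * (t * a i + b i)) =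
      t * t * A + (2 * t * C + B).
    rewrite (eq_bigr (fun i => t * t * (a i * a i) + (2 * t * (a i * b i) + b i * b i)));
      last by move=> i _; ring.
    rewrite !sumD !sumMl; reflexivity.
  have : 0 <= \big[Rplus/0]_(i < n) ((t * a i + b i) * (t * a i + b i)).
    by apply: sum_ge0 => i; apply: Rle_0_sqr.
  lra.
have hA : 0 <= A by apply: sum_ge0 => i; apply: Rle_0_sqr.
have hB : 0 <= B by apply: sum_ge0 => i; apply: Rle_0_sqr.
have hC2 : C * C <= A * B.
  case: (Rle_lt_or_eq_dec _ _ hA) => hA'.
    have h := key (- C / A).
    have e : A * ((- C / A) * (- C / A) * A + 2 * (- C / A) * C + B) = A * B - C * C.
      by field; lra.
    have := Rmult_le_pos _ _ (Rlt_le _ _ hA') h; rewrite e; lra.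
  have hC : C = 0.
    case: (Req_dec C 0) => // hC.
    have h := key (- (B + 1) / (2 * C)).
    rewrite -hA' in h.
    have e : - (B + 1) / (2 * C) * (- (B + 1) / (2 * C)) * 0 + 2 * (- (B + 1) / (2 * C)) * C + B = -1.
      by field.
    lra.
  rewrite hC -hA'; lra.
rewrite /normv -/A -/B -/C.
case: (Rle_lt_dec C 0) => hc.
  have := sqrt_pos A; have := sqrt_pos B; move=> h1 h2; have := Rmult_le_pos _ _ h2 h1; lra.
rewrite -sqrt_mult //.
rewrite -{1}(sqrt_square C); last lra.
by apply: sqrt_le_1_alt.
Qed.

Theorem proposition1 (n : nat) (Rset : vec n -> Prop) (Mset : vec n -> Prop) :
  compact_set Rset -> convex_set Rset ->
  (forall e : vec1 n, is_effect Rset e ->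
     exists g m, 0 <= g <= 1 /\ Mset m /\ e = scaled_effect g m) ->
  (* chi_C(Omega) <= sup_{r in R, m in M} log2 (1 + m.r) *)
  (forall S : R,
     is_lub (fun t => exists r m, Rset r /\ Mset m /\ t = log2 (1 + dotv m r)) S ->
     forall (k l : nat) (p : 'I_k -> R) (r : 'I_k -> vec n) (e : 'I_l -> vec1 n),
       valid_scheme Rset p r e -> mutual_info (joint p r e) <= S) /\
  (* sup_{r in R, m in M} log2 (1 + m.r) <= log2 (1 + M R) *)
  (forall M R0 : R,
     is_lub (fun t => exists m, Mset m /\ t = normv m) M ->
     is_lub (fun t => exists r, Rset r /\ t = normv r) R0 ->
     forall r m, Rset r -> Mset m -> log2 (1 + dotv m r) <= log2 (1 + M * R0)).
Proof.
move=> _ _ Hdec.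
have L0 := ln2_pos.
have iL0 : 0 < / ln 2 by apply: Rinv_0_lt_compat.
split; last first.
  move=> M R0 [HM _] [HR _] r m Hr Hm.
  have nm : normv m <= M by apply: HM; exists m.
  have nr : normv r <= R0 by apply: HR; exists r.
  have pm := sqrt_pos (dotv m m); have pr := sqrt_pos (dotv r r).
  rewrite /normv in nm nr.
  have cs := @CS n m r; rewrite /normv in cs.
  have : sqrt (dotv m m) * sqrt (dotv r r) <= M * R0 by apply: Rmult_le_compat.
  move=> hMR.
  rewrite /log2 /Rdiv; apply: Rmult_le_compat_r; first lra.
  case: (Rlt_le_dec 0 (1 + dotv m r)) => h.
    apply: ln_le' => //; lra.
  have -> : ln (1 + dotv m r) = 0 by unfold ln; destruct (Rlt_dec 0 (1 + dotv m r)); [exfalso; lra|reflexivity].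
  rewrite -ln_1; apply: ln_le'; first lra.
  have : 0 <= M * R0 by apply: Rmult_le_pos; lra.
  lra.
move=> S [HS _] k l p r e [Hp0 [Hp1 [Hr [He [Hg Hsnd]]]]].
have HS1 : forall r0 m0, Rset r0 -> Mset m0 -> log2 (1 + dotv m0 r0) <= S.
  by move=> r0 m0 h1 h2; apply: HS; exists r0, m0.
simpl in Hg, Hsnd.
have Hg0 : forall y, 0 <= fst (e y).
  by move=> y; have [g [m [hg [_ ->]]]] := Hdec _ (He y); simpl; lra.
have HP0 : forall x y, 0 <= joint p r e x y.
  move=> x y; rewrite /joint; apply: Rmult_le_pos => //.
  by have [] := He y (r x) (Hr x).
have Hrow : forall x, \big[Rplus/0]_(y < l) dot1 (e y) (omega (r x)) = 1.
  move=> x; rewrite /dot1 /omega /= sumD sumMr Hg Rmult_1_r /dotv.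
  rewrite exchange_big /=.
  rewrite (eq_bigr (fun i => 0)); first by rewrite big1 //; lra.
  by move=> i _; rewrite sumMr Hsnd; ring.
have Hpx : forall x, \big[Rplus/0]_(y < l) joint p r e x y = p x.
  by move=> x; rewrite /joint sumMl Hrow Rmult_1_r.
pose py y := \big[Rplus/0]_(x < k) joint p r e x y.
have Hpy0 : forall y, 0 <= py y by move=> y; apply: sum_ge0.
have Htot : \big[Rplus/0]_(y < l) py y = 1.
  by rewrite /py exchange_big /=; under eq_bigr do rewrite Hpx.
pose K y := S + (fst (e y) / py y - 1) / ln 2.
rewrite /mutual_info; cbv zeta.
apply: (Rle_trans _ (\big[Rplus/0]_(x < k) \big[Rplus/0]_(y < l) (joint p r e x y * K y))).
  apply: sum_le => x; apply: sum_le => y.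
  case: (Rlt_dec 0 (joint p r e x y)) => hP /=; last first.
    have -> : joint p r e x y = 0 by have := HP0 x y; lra.
    rewrite Rmult_0_l; lra.
  rewrite Hpx -/(py y).
  have [g [m [hg [hm Heq]]]] := Hdec _ (He y).
  have Hfst : fst (e y) = g by rewrite Heq.
  have Hd : dot1 (e y) (omega (r x)) = g * (1 + dotv m (r x)).
    rewrite Heq /dot1 /scaled_effect /omega /dotv /=.
    rewrite (eq_bigr (fun i => g * (m i * r x i))); last by move=> i _; ring.
    by rewrite sumMl Rmult_plus_distr_l Rmult_1_r.
  have HPe : joint p r e x y = p x * (g * (1 + dotv m (r x))) by rewrite /joint Hd.
  have hpx := Hp0 x.
  have hpos : 0 < p x /\ 0 < g /\ 0 < 1 + dotv m (r x).
    rewrite HPe in hP.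
    case: (Rle_lt_or_eq_dec _ _ hpx) => h1; last by rewrite -h1 in hP; lra.
    case: (Rle_lt_or_eq_dec 0 g (proj1 hg)) => h2; last by rewrite -h2 in hP; lra.
    split => //; split => //.
    case: (Rlt_le_dec 0 (1 + dotv m (r x))) => // h3.
    have : p x * (g * (1 + dotv m (r x))) <= 0.
      rewrite -Rmult_assoc.
      have hpg : 0 <= p x * g by apply: Rmult_le_pos; lra.
      have := Rmult_le_compat_l _ _ _ hpg h3; rewrite Rmult_0_r; lra.
    lra.
  case: hpos => hpx' [hg' hd'].
  have hpyP : joint p r e x y <= py y 
    by rewrite /py; apply: (@term_le_sum k (fun x0 => joint p r e x0 y) x) => x0; apply: HP0.
  have hpy : 0 < py y by lra.
  have Hsplit : joint p r e x y / (p x * py y) = (1 + dotv m (r x)) * (g / py y).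
    by rewrite HPe; field; lra.
  rewrite /log2 Hsplit ln_mult; last (by apply: Rdiv_lt_0_compat); last by [].
  have h1 : ln (1 + dotv m (r x)) / ln 2 <= S by apply: HS1.
  have h2 : ln (g / py y) <= g / py y - 1 by apply: ln_le_sub1; apply: Rdiv_lt_0_compat.
  apply: Rmult_le_compat_l; first lra.
  rewrite /K Hfst /Rdiv Rmult_plus_distr_r; apply: Rplus_le_compat; first exact h1.
  by apply: Rmult_le_compat_r; lra.
rewrite exchange_big /=.
apply: (Rle_trans _ (\big[Rplus/0]_(y < l) (S * py y + fst (e y) * / ln 2 - py y * / ln 2))).
  apply: sum_le => y.
  rewrite sumMr -/(py y).
  have hg := Hg0 y.
  have hq : py y * (fst (e y) / py y) <= fst (e y).
    case: (Rle_lt_or_eq_dec _ _ (Hpy0 y)) => h.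
      by rewrite /Rdiv -Rmult_assoc (Rmult_comm (py y)) Rmult_assoc Rinv_r; lra.
    by rewrite -h Rmult_0_l.
  have -> : py y * K y = S * py y + (py y * (fst (e y) / py y) - py y) * / ln 2.
    by rewrite /K; unfold Rdiv; ring.
  have : (py y * (fst (e y) / py y) - py y) * / ln 2 <= (fst (e y) - py y) * / ln 2.
    by apply: Rmult_le_compat_r; lra.
  lra.
rewrite (eq_bigr (fun y => S * py y + (fst (e y) * / ln 2 + (-1) * (py y * / ln 2))));
  last by move=> y _; ring.
rewrite !sumD !sumMl sumMr sumMr Htot Hg; lra.
Qed.
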